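(* SP, BTI, WF, PCI, IRE and RPI hold for the LTSIs of CCSKP (CCSK with proof labels) and CCSK.
   Context: CCSK processes: $X ::= \mathbf{0} \mid \alpha.X \mid X\backslash\lambda \mid X+Y \mid X \mid Y \mid \alpha[k].X$, where $\alpha$ ranges over names, co-names and $\tau$, $\lambda$ over non-$\tau$ labels, and $k$ over keys; $\mathrm{keys}(X)$ is the set of keys in $X$, and $X$ is standard if $\mathrm{keys}(X)=\emptyset$. Only reachable processes (reachable by a path from a standard process) are considered. CCSKP forward rules (with proof keyed labels $\theta$ built from strings over $\mid_L,\mid_R,+_L,+_R$, actions $\alpha[k]$ and synchronisation pairs $\langle\upsilon_1\lambda[k],\upsilon_2\overline\lambda[k]\rangle$, each having a key): act: $\alpha.X \to^{\alpha[k]} \alpha[k].X$ if $X$ standard; pre: $\alpha[k].X \to^{\theta} \alpha[k].X'$ if $X\to^\theta X'$ and the key of $\theta$ is not $k$; res: $X\backslash a \to^\theta X'\backslash a$ if $X\to^\theta X'$ and the action of $\theta$ is not $a$ or $\overline a$; par: $X\mid Y \to^{\mid_L\theta} X'\mid Y$ if $X\to^\theta X'$ and the key of $\theta$ is not in $\mathrm{keys}(Y)$ (symmetrically on the right); syn: $X\mid Y \to^{\langle\upsilon_L\lambda[k],\upsilon_R\overline\lambda[k]\rangle} X'\mid Y'$ if $X\to^{\upsilon_L\lambda[k]}X'$ and $Y\to^{\upsilon_R\overline\lambda[k]}Y'$; sum: $X+Y\to^{+_L\theta}X'+Y$ if $X\to^\theta X'$ and $Y$ standard (symmetrically on the right).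 Backward transitions are the inverses of forward ones. CCSK has the same rules with labels $\alpha[k]$ only (proof part erased); CCSK and CCSKP transitions are in bijection. Two transitions are connected if there is a path from the source of one to the target of the other. The independence relation: two transitions are independent iff they are connected and their proof keyed labels (for CCSK, those of the corresponding CCSKP transitions) are independent, where label independence is the least relation with: $+_d\theta$ independent of $+_d\theta'$ if $\theta$ independent of $\theta'$; $\mid_d\theta$ independent of $\mid_d\theta'$ if $\theta$ independent of $\theta'$; $\mid_d\theta$ independent of $\mid_{\overline d}\theta'$ if their keys differ; $\mid_d\theta$ independent of $\langle\theta_L,\theta_R\rangle$ (and symmetrically) if $\theta$ independent of $\theta_d$; $\langle\theta_1,\theta_2\rangle$ independent of $\langle\theta'_1,\theta'_2\rangle$ if $\theta_1$ independent of $\theta'_1$ and $\theta_2$ independent of $\theta'_2$. An LTSI is a combined forward/backward LTS with an irreflexive symmetric independence relation on transitions. Axioms: SP (square property): coinitial independent $t:P\to^\alpha Q$, $u:P\to^\beta R$ admit cofinal $u':Q\to^\beta S$, $t':R\to^\alpha S$. BTI: distinct coinitial backward transitions are independent. WF: no infinite backward computation. PCI: in such a square with $t$ independent of $u$, $u'$ is independent of the inverse of $t$. IRE: if $t\sim t'$ and $t'$ independent of $u$ then $t$ independent of $u$, where $\sim$ (event equivalence) is the least equivalence relating opposite sides $t,t'$ of squares built from independent coinitial $t,u$. RPI: if $t$ independent of $t'$ then the inverse of $t$ is independent of $t'$. *)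

(* Defs.v *)
From Stdlib Require Import List Relations.
Set Implicit Arguments.

Definition name := nat.
Definition key := nat.

Inductive nlab := LName (a : name) | LCo (a : name).
Definition compl (l : nlab) : nlab :=
  match l with LName a => LCo a | LCo a => LName a end.

Inductive act := AL (l : nlab) | Tau.

(** X ::= 0 | alpha.X | X\lambda | X+Y | X|Y | alpha[k].X *)
Inductive proc :=
| Nil
| Pre  (a : act) (X : proc)
| Res  (X : proc) (l : nlab)
| Sum  (X Y : proc)
| Par  (X Y : proc)
| KPre (a : act) (k : key) (X : proc).

Fixpoint keys (X : proc) : list key :=
  match X with
  | Nil => nil
  | Pre _ X => keys X
  | Res X _ => keys X
  | Sum X Y => keys X ++ keys Y
  | Par X Y => keys X ++ keys Y
  | KPre _ k X => k :: keys X
  end.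

Definition std (X : proc) : Prop := keys X = nil.

Inductive side := SL | SR.
Definition opp (d : side) := match d with SL => SR | SR => SL end.

Inductive plab :=
| PA   (a : act) (k : key)
| PPar (d : side) (t : plab)
| PSum (d : side) (t : plab)
| PSyn (t1 t2 : plab).

Fixpoint pkey (t : plab) : key :=
  match t with
  | PA _ k => k | PPar _ t => pkey t | PSum _ t => pkey t | PSyn t1 _ => pkey t1
  end.

Fixpoint pact (t : plab) : act :=
  match t with
  | PA a _ => a | PPar _ t => pact t | PSum _ t => pact t | PSyn _ _ => Tau
  end.

Inductive ptrans : proc -> plab -> proc -> Prop :=
| p_act a X k : std X -> ptrans (Pre a X) (PA a k) (KPre a k X)
| p_pre a k X t X' :
    ptrans X t X' -> pkey t <> k -> ptrans (KPre a k X) t (KPre a k X')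
| p_res X t X' l :
    ptrans X t X' -> pact t <> AL l -> pact t <> AL (compl l) ->
    ptrans (Res X l) t (Res X' l)
| p_parL X Y t X' :
    ptrans X t X' -> ~ In (pkey t) (keys Y) ->
    ptrans (Par X Y) (PPar SL t) (Par X' Y)
| p_parR X Y t Y' :
    ptrans Y t Y' -> ~ In (pkey t) (keys X) ->
    ptrans (Par X Y) (PPar SR t) (Par X Y')
| p_syn X Y X' Y' tL tR l :
    ptrans X tL X' -> ptrans Y tR Y' ->
    pact tL = AL l -> pact tR = AL (compl l) -> pkey tL = pkey tR ->
    ptrans (Par X Y) (PSyn tL tR) (Par X' Y')
| p_sumL X Y t X' :
    ptrans X t X' -> std Y -> ptrans (Sum X Y) (PSum SL t) (Sum X' Y)
| p_sumR X Y t Y' :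
    ptrans Y t Y' -> std X -> ptrans (Sum X Y) (PSum SR t) (Sum X Y').

Definition klab := (act * key)%type.

Inductive ctrans : proc -> klab -> proc -> Prop :=
| c_act a X k : std X -> ctrans (Pre a X) (a, k) (KPre a k X)
| c_pre a k X b k' X' :
    ctrans X (b, k') X' -> k' <> k -> ctrans (KPre a k X) (b, k') (KPre a k X')
| c_res X b k X' l :
    ctrans X (b, k) X' -> b <> AL l -> b <> AL (compl l) ->
    ctrans (Res X l) (b, k) (Res X' l)
| c_parL X Y b k X' :
    ctrans X (b, k) X' -> ~ In k (keys Y) -> ctrans (Par X Y) (b, k) (Par X' Y)
| c_parR X Y b k Y' :
    ctrans Y (b, k) Y' -> ~ In k (keys X) -> ctrans (Par X Y) (b, k) (Par X Y')
| c_syn X Y X' Y' l k :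
    ctrans X (AL l, k) X' -> ctrans Y (AL (compl l), k) Y' ->
    ctrans (Par X Y) (Tau, k) (Par X' Y')
| c_sumL X Y b k X' :
    ctrans X (b, k) X' -> std Y -> ctrans (Sum X Y) (b, k) (Sum X' Y)
| c_sumR X Y b k Y' :
    ctrans Y (b, k) Y' -> std X -> ctrans (Sum X Y) (b, k) (Sum X Y').

Definition erase (t : plab) : klab := (pact t, pkey t).

Definition pick (d : side) (tL tR : plab) := match d with SL => tL | SR => tR end.

Inductive pind : plab -> plab -> Prop :=
| i_sum d t t' : pind t t' -> pind (PSum d t) (PSum d t')
| i_par d t t' : pind t t' -> pind (PPar d t) (PPar d t')
| i_par_opp d t t' : pkey t <> pkey t' -> pind (PPar d t) (PPar (opp d) t')
| i_par_syn d t tL tR : pind t (pick d tL tR) -> pind (PPar d t) (PSyn tL tR)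
| i_syn_par d t tL tR : pind (pick d tL tR) t -> pind (PSyn tL tR) (PPar d t)
| i_syn t1 t2 t1' t2' :
    pind t1 t1' -> pind t2 t2' -> pind (PSyn t1 t2) (PSyn t1' t2').

(** a transition: source, label, target, direction (true = forward) *)
Record trans (St L : Type) := Tr { src : St; lab : L; tgt : St; fwd : bool }.

Section LTSI.
Variables (St L : Type) (F : St -> L -> St -> Prop) (st : St -> Prop).
Variable I : trans St L -> trans St L -> Prop.

Definition step (P Q : St) : Prop := exists l, F P l Q \/ F Q l P.
Definition reach : St -> St -> Prop := clos_refl_trans St step.
Definition reachable (P : St) : Prop := exists P0, st P0 /\ reach P0 P.

Definition valid (t : trans St L) : Prop :=
  if fwd t then F (src t) (lab t) (tgt t) else F (tgt t) (lab t) (src t).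
Definition in_lts (t : trans St L) : Prop := reachable (src t) /\ valid t.

Definition connected (t u : trans St L) : Prop := reach (src t) (tgt u).
Definition inv (t : trans St L) : trans St L :=
  Tr (tgt t) (lab t) (src t) (negb (fwd t)).

(** t : P -a-> Q, u : P -b-> R, u' : Q -b-> S, t' : R -a-> S *)
Definition square (t u u' t' : trans St L) : Prop :=
  in_lts t /\ in_lts u /\ in_lts u' /\ in_lts t' /\
  src t = src u /\ src u' = tgt t /\ src t' = tgt u /\ tgt u' = tgt t' /\
  lab u' = lab u /\ fwd u' = fwd u /\ lab t' = lab t /\ fwd t' = fwd t.

Definition SP : Prop :=
  forall t u, in_lts t -> in_lts u -> src t = src u -> I t u ->
  exists u' t', square t u u' t'.

Definition BTI : Prop :=
  forall t u, in_lts t -> in_lts u -> fwd t = false -> fwd u = false ->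
  src t = src u -> t <> u -> I t u.

Definition WF : Prop :=
  ~ exists f : nat -> St, reachable (f 0) /\
      forall n, exists l, F (f (S n)) l (f n).

Definition PCI : Prop :=
  forall t u u' t', square t u u' t' -> I t u -> I u' (inv t).

Definition ev_eq : trans St L -> trans St L -> Prop :=
  clos_refl_sym_trans (trans St L)
    (fun t t' => exists u u', square t u u' t' /\ I t u).

Definition IRE : Prop :=
  forall t t' u, in_lts t -> in_lts t' -> in_lts u ->
  ev_eq t t' -> I t' u -> I t u.

Definition RPI : Prop :=
  forall t t', in_lts t -> in_lts t' -> I t t' -> I (inv t) t'.

End LTSI.

Definition pI (t u : trans proc plab) : Prop :=
  connected ptrans t u /\ pind (lab t) (lab u).

Definition corr (t : trans proc klab) (th : plab) : Prop :=
  valid ptrans (Tr (src t) th (tgt t) (fwd t)) /\ erase th = lab t.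

Definition cI (t u : trans proc klab) : Prop :=
  connected ctrans t u /\
  exists th th', corr t th /\ corr u th' /\ pind th th'.

(* Main.v *)
Require Import Defs.
From Stdlib Require Import List Relations Lia.

Lemma fresh : forall X t X', ptrans X t X' -> ~ In (pkey t) (keys X).
Proof.
  induction 1; simpl in *; rewrite ?in_app_iff; try tauto.
  - unfold std in H; rewrite H; simpl; tauto.
  - intros [E|E]; [congruence|tauto].
  - match goal with E: pkey _ = pkey _ |- _ => rewrite E end; intros [E|E]; [apply IHptrans1; congruence| tauto].
  - unfold std in *; match goal with E: keys _ = nil |- _ => rewrite E end; simpl; tauto.
  - unfold std in *; match goal with E: keys _ = nil |- _ => rewrite E end; simpl; tauto.
Qed.

Lemma key_in : forall X t X', ptrans X t X' -> In (pkey t) (keys X').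
Proof.
  induction 1; simpl in *; rewrite ?in_app_iff; tauto.
Qed.

Lemma keys_incl : forall X t X', ptrans X t X' -> forall k, In k (keys X) -> In k (keys X').
Proof.
  induction 1; simpl in *; intros; rewrite ?in_app_iff in *; firstorder.
Qed.

Lemma keys_sub : forall X t X', ptrans X t X' -> forall k, In k (keys X') -> k = pkey t \/ In k (keys X).
Proof.
  induction 1; simpl in *; intros kk Hk; rewrite ?in_app_iff in *.
  - unfold std in H; rewrite H in Hk; simpl in Hk; intuition.
  - destruct Hk as [E|E]; [auto|]. destruct (IHptrans _ E); auto.
  - auto.
  - destruct Hk as [E|E]; [destruct (IHptrans _ E)|]; auto.
  - destruct Hk as [E|E]; [|destruct (IHptrans _ E)]; auto.
  - destruct Hk as [E|E]; [destruct (IHptrans1 _ E)|destruct (IHptrans2 _ E)]; auto.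
    left; congruence.
  - destruct Hk as [E|E]; [destruct (IHptrans _ E)|]; auto.
  - destruct Hk as [E|E]; [|destruct (IHptrans _ E)]; auto.
Qed.

Lemma len : forall X t X', ptrans X t X' -> length (keys X) < length (keys X').
Proof.
  induction 1; simpl in *; rewrite ?length_app; try lia.
Qed.

Lemma neq_tr : forall X t X', ptrans X t X' -> X <> X'.
Proof. intros X t X' H E; subst; apply len in H; lia. Qed.

Lemma std_nb : forall X t X', std X -> ptrans X' t X -> False.
Proof. intros X t X' Hs H; apply key_in in H; unfold std in Hs; rewrite Hs in H; auto. Qed.

Ltac keyclash := exfalso; match goal with Hn: ~ In ?a (keys ?X), Ht : ptrans _ ?t ?X |- _ =>
   apply Hn; replace a with (pkey t) by congruence; exact (key_in _ _ _ Ht) end.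

Lemma uniq_back : forall P Q1 Q2 t1 t2, ptrans Q1 t1 P -> ptrans Q2 t2 P ->
  pkey t1 = pkey t2 -> t1 = t2 /\ Q1 = Q2.
Proof.
  induction P; intros Q1 Q2 t1 t2 H1 H2 Hk; inversion H1; subst; inversion H2; subst; simpl in *;
  try solve [auto | exfalso; eapply std_nb; eauto | keyclash];
  try (match goal with IH : forall Q1 Q2 t1 t2, ptrans Q1 t1 ?P -> _, A: ptrans _ _ ?P, B : ptrans _ _ ?P |- _ =>
     destruct (IH _ _ _ _ A B) as [? ?]; [congruence|]; subst end; auto; congruence).

  destruct (IHP1 _ _ _ _ H3 H6) as [? ?]; [congruence|]; subst; auto.
  destruct (IHP2 _ _ _ _ H4 H7) as [? ?]; [congruence|]; subst; auto.
Qed.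

Lemma det : forall P t1 Q, ptrans P t1 Q -> forall t2, ptrans P t2 Q -> t1 = t2.
Proof.
  induction 1; intros t2 HH; inversion HH; subst;
  try solve [f_equal; auto | exfalso; match goal with H: ptrans ?A _ ?A |- _ => exact (neq_tr _ _ _ H eq_refl) end].
Qed.

Lemma pind_sym : forall t u, pind t u -> pind u t.
Proof.
  induction 1; try constructor; auto.
  replace d with (opp (opp d)) at 2 by (destruct d; reflexivity). constructor; auto.
Qed.

Ltac ex_solve := repeat (first [eexists | split]); eauto.
Ltac br_solve := first [solve [ex_solve] | solve [left; ex_solve] | solve [right; left; ex_solve] | solve [right; right; ex_solve] | solve [right; ex_solve]].

Definition T P th Q (b : bool) := if b then ptrans P th Q else ptrans Q th P.

Lemma T_par_inv X Y th Q b : T (Par X Y) th Q b ->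
 (exists t X', th = PPar SL t /\ Q = Par X' Y /\ T X t X' b /\ ~ In (pkey t) (keys Y)) \/
 (exists t Y', th = PPar SR t /\ Q = Par X Y' /\ T Y t Y' b /\ ~ In (pkey t) (keys X)) \/
 (exists tL tR X' Y' l, th = PSyn tL tR /\ Q = Par X' Y' /\ T X tL X' b /\ T Y tR Y' b /\
    pact tL = AL l /\ pact tR = AL (compl l) /\ pkey tL = pkey tR).
Proof. destruct b; simpl; intro H; inversion H; subst; br_solve. Qed.

Lemma T_kpre_inv a k X th Q b : T (KPre a k X) th Q b ->
 (exists X', Q = KPre a k X' /\ T X th X' b /\ pkey th <> k) \/
 (b = false /\ th = PA a k /\ std X /\ Q = Pre a X).
Proof. destruct b; simpl; intro H; inversion H; subst; br_solve. Qed.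

Lemma T_pre_inv a X th Q b : T (Pre a X) th Q b -> exists a' k, th = PA a' k.
Proof. destruct b; simpl; intro H; inversion H; subst; br_solve. Qed.

Lemma T_nil_inv th Q b : T Nil th Q b -> False.
Proof. destruct b; simpl; intro H; inversion H. Qed.

Lemma T_res_inv X l th Q b : T (Res X l) th Q b ->
  exists X', Q = Res X' l /\ T X th X' b /\ pact th <> AL l /\ pact th <> AL (compl l).
Proof. destruct b; simpl; intro H; inversion H; subst; br_solve. Qed.

Lemma T_sum_inv X Y th Q b : T (Sum X Y) th Q b ->
 (exists t X', th = PSum SL t /\ Q = Sum X' Y /\ T X t X' b /\ std Y) \/
 (exists t Y', th = PSum SR t /\ Q = Sum X Y' /\ T Y t Y' b /\ std X).
Proof. destruct b; simpl; intro H; inversion H; subst; br_solve. Qed.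

Lemma T_parL X Y t X' b : T X t X' b -> ~ In (pkey t) (keys Y) -> T (Par X Y) (PPar SL t) (Par X' Y) b.
Proof. destruct b; simpl; intros; constructor; auto. Qed.
Lemma T_parR X Y t Y' b : T Y t Y' b -> ~ In (pkey t) (keys X) -> T (Par X Y) (PPar SR t) (Par X Y') b.
Proof. destruct b; simpl; intros; constructor; auto. Qed.
Lemma T_syn X Y X' Y' tL tR l b : T X tL X' b -> T Y tR Y' b ->
    pact tL = AL l -> pact tR = AL (compl l) -> pkey tL = pkey tR ->
    T (Par X Y) (PSyn tL tR) (Par X' Y') b.
Proof. destruct b; simpl; intros; econstructor; eauto. Qed.
Lemma T_sumL X Y t X' b : T X t X' b -> std Y -> T (Sum X Y) (PSum SL t) (Sum X' Y) b.
Proof. destruct b; simpl; intros; constructor; auto. Qed.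
Lemma T_sumR X Y t Y' b : T Y t Y' b -> std X -> T (Sum X Y) (PSum SR t) (Sum X Y') b.
Proof. destruct b; simpl; intros; constructor; auto. Qed.
Lemma T_kpre a k X th X' b : T X th X' b -> pkey th <> k -> T (KPre a k X) th (KPre a k X') b.
Proof. destruct b; simpl; intros; constructor; auto. Qed.
Lemma T_res X l th X' b : T X th X' b -> pact th <> AL l -> pact th <> AL (compl l) ->
  T (Res X l) th (Res X' l) b.
Proof. destruct b; simpl; intros; constructor; auto. Qed.

Lemma T_keys X t X' b : T X t X' b -> forall k, In k (keys X') -> k = pkey t \/ In k (keys X).
Proof. destruct b; simpl; intros H k Hk. eapply keys_sub; eauto. right; eapply keys_incl; eauto. Qed.

Lemma key_neq X X1 X2 S th th' b b' : T X th X1 b -> T X th' X2 b' -> T X1 th' S b' -> pkey th <> pkey th'.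
Proof.
  destruct b, b'; simpl; intros H1 H2 H3 E.
  - apply key_in in H1. apply fresh in H3. rewrite E in H1. auto.
  - apply fresh in H1. apply key_in in H2. rewrite E in H1. auto.
  - apply key_in in H1. apply fresh in H2. rewrite E in H1. auto.
  - apply fresh in H1. apply key_in in H3. rewrite E in H1. auto.
Qed.

Lemma not_in_after X t X' b k : T X t X' b -> k <> pkey t -> ~ In k (keys X) -> ~ In k (keys X').
Proof. intros H N1 N2 I. destruct (T_keys _ _ _ _ H _ I); auto. Qed.

Lemma square_p : forall P th th' b b' Q R, T P th Q b -> T P th' R b' -> pind th th' ->
  exists S, T Q th' S b' /\ T R th S b.
Proof.
  induction P; intros th th' b b' Q R H1 H2 Hp.
  - destruct (T_nil_inv _ _ _ H1).
  - destruct (T_pre_inv _ _ _ _ _ H1) as [? [? ->]]; inversion Hp.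
  - destruct (T_res_inv _ _ _ _ _ H1) as [X1 [-> [HX1 [A1 B1]]]].
    destruct (T_res_inv _ _ _ _ _ H2) as [X2 [-> [HX2 [A2 B2]]]].
    destruct (IHP _ _ _ _ _ _ HX1 HX2 Hp) as [S [U1 U2]].
    exists (Res S l); split; apply T_res; auto.
  - destruct (T_sum_inv _ _ _ _ _ H1) as [[t [X1 [-> [-> [HX1 S1]]]]]|[t [X1 [-> [-> [HX1 S1]]]]]];
    destruct (T_sum_inv _ _ _ _ _ H2) as [[t' [X2 [-> [-> [HX2 S2]]]]]|[t' [X2 [-> [-> [HX2 S2]]]]]];
    inversion Hp; subst.
    + destruct (IHP1 _ _ _ _ _ _ HX1 HX2 ltac:(assumption)) as [S [U1 U2]].
      exists (Sum S P2); split; apply T_sumL; auto.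
    + destruct (IHP2 _ _ _ _ _ _ HX1 HX2 ltac:(assumption)) as [S [U1 U2]].
      exists (Sum P1 S); split; apply T_sumR; auto.
  - destruct (T_par_inv _ _ _ _ _ H1) as
      [[t [X1 [-> [-> [HX1 N1]]]]]|[[t [Y1 [-> [-> [HY1 N1]]]]]|
       [tL [tR [X1 [Y1 [l [-> [-> [HX1 [HY1 [A1 [B1 K1]]]]]]]]]]]]];
    destruct (T_par_inv _ _ _ _ _ H2) as
      [[t' [X2 [-> [-> [HX2 N2]]]]]|[[t' [Y2 [-> [-> [HY2 N2]]]]]|
       [tL' [tR' [X2 [Y2 [l' [-> [-> [HX2 [HY2 [A2 [B2 K2]]]]]]]]]]]]];
    inversion Hp; subst; simpl in *; try discriminate.
    +
      destruct (IHP1 _ _ _ _ _ _ HX1 HX2 ltac:(assumption)) as [S [U1 U2]].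
      exists (Par S P2); split; apply T_parL; auto.
    +
      exists (Par X1 Y2); split.
      * apply T_parR; auto. eapply not_in_after; eauto.
      * apply T_parL; auto. eapply not_in_after; eauto.
    +
      destruct (IHP1 _ _ _ _ _ _ HX1 HX2 ltac:(assumption)) as [S [U1 U2]].
      exists (Par S Y2); split.
      * eapply T_syn; eauto.
      * apply T_parL; auto. eapply not_in_after; eauto.
        rewrite <- K2. intro E. eapply (key_neq _ _ _ _ _ _ _ _ HX1 HX2 U1); auto.
    +
      exists (Par X2 Y1); split.
      * apply T_parL; auto. eapply not_in_after; eauto.
      * apply T_parR; auto. eapply not_in_after; eauto.
    +
      destruct (IHP2 _ _ _ _ _ _ HY1 HY2 ltac:(assumption)) as [S [U1 U2]].
      exists (Par P1 S); split; apply T_parR; auto.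
    +
      destruct (IHP2 _ _ _ _ _ _ HY1 HY2 ltac:(assumption)) as [S [U1 U2]].
      exists (Par X2 S); split.
      * eapply T_syn; eauto.
      * apply T_parR; auto. eapply not_in_after; eauto.
        rewrite K2. intro E. eapply (key_neq _ _ _ _ _ _ _ _ HY1 HY2 U1); auto.
    +
      destruct (IHP1 _ _ _ _ _ _ HX1 HX2 ltac:(assumption)) as [S [U1 U2]].
      exists (Par S Y1); split.
      * apply T_parL; auto. eapply not_in_after; eauto.
        rewrite <- K1. intro E. eapply (key_neq _ _ _ _ _ _ _ _ HX1 HX2 U1); auto.
      * eapply T_syn; eauto.
    +
      destruct (IHP2 _ _ _ _ _ _ HY1 HY2 ltac:(assumption)) as [S [U1 U2]].
      exists (Par X1 S); split.
      * apply T_parR; auto. eapply not_in_after; eauto.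
        rewrite K1. intro E. eapply (key_neq _ _ _ _ _ _ _ _ HY1 HY2 U1); auto.
      * eapply T_syn; eauto.
    +
      destruct (IHP1 _ _ _ _ _ _ HX1 HX2 ltac:(assumption)) as [S [U1 U2]].
      destruct (IHP2 _ _ _ _ _ _ HY1 HY2 ltac:(assumption)) as [S' [U1' U2']].
      exists (Par S S'); split; eapply T_syn; eauto.
  - destruct (T_kpre_inv _ _ _ _ _ _ H1) as [[X1 [-> [HX1 N1]]]|[_ [-> _]]];
    [|inversion Hp].
    destruct (T_kpre_inv _ _ _ _ _ _ H2) as [[X2 [-> [HX2 N2]]]|[_ [-> _]]];
    [|inversion Hp].
    destruct (IHP _ _ _ _ _ _ HX1 HX2 Hp) as [S [U1 U2]].
    exists (KPre a k S); split; apply T_kpre; auto.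
Qed.

Lemma Tb_key X t X' : T X t X' false -> In (pkey t) (keys X).
Proof. simpl; intro H; exact (key_in _ _ _ H). Qed.

Lemma bti_p : forall P t1 t2 Q1 Q2, T P t1 Q1 false -> T P t2 Q2 false -> t1 <> t2 -> pind t1 t2.
Proof.
  induction P; intros t1 t2 Q1 Q2 H1 H2 Hne.
  - destruct (T_nil_inv _ _ _ H1).
  - simpl in H1; inversion H1.
  - destruct (T_res_inv _ _ _ _ _ H1) as [X1 [-> [HX1 _]]].
    destruct (T_res_inv _ _ _ _ _ H2) as [X2 [-> [HX2 _]]].
    eauto.
  - destruct (T_sum_inv _ _ _ _ _ H1) as [[t [X1 [-> [-> [HX1 S1]]]]]|[t [X1 [-> [-> [HX1 S1]]]]]];
    destruct (T_sum_inv _ _ _ _ _ H2) as [[t' [X2 [-> [-> [HX2 S2]]]]]|[t' [X2 [-> [-> [HX2 S2]]]]]].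
    + constructor; eapply IHP1; eauto. congruence.
    + exfalso; eapply std_nb; [exact S2|exact HX1].
    + exfalso; eapply std_nb; [exact S2|exact HX1].
    + constructor; eapply IHP2; eauto. congruence.
  - destruct (T_par_inv _ _ _ _ _ H1) as
      [[t [X1 [-> [-> [HX1 N1]]]]]|[[t [Y1 [-> [-> [HY1 N1]]]]]|
       [tL [tR [X1 [Y1 [l [-> [-> [HX1 [HY1 [A1 [B1 K1]]]]]]]]]]]]];
    destruct (T_par_inv _ _ _ _ _ H2) as
      [[t' [X2 [-> [-> [HX2 N2]]]]]|[[t' [Y2 [-> [-> [HY2 N2]]]]]|
       [tL' [tR' [X2 [Y2 [l' [-> [-> [HX2 [HY2 [A2 [B2 K2]]]]]]]]]]]]].
    + constructor; eapply IHP1; eauto; congruence.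
    + apply (i_par_opp SL). intro E. apply Tb_key in HX1. rewrite E in HX1. auto.
    + apply (i_par_syn SL); simpl. eapply IHP1; eauto. intro E; subst.
      apply Tb_key in HY2. rewrite <- K2 in HY2. auto.
    + apply (i_par_opp SR). intro E. apply Tb_key in HY1. rewrite E in HY1. auto.
    + constructor; eapply IHP2; eauto; congruence.
    + apply (i_par_syn SR); simpl. eapply IHP2; eauto. intro E; subst.
      apply Tb_key in HX2. rewrite K2 in HX2. auto.
    + apply (i_syn_par SL); simpl. eapply IHP1; eauto. intro E; subst.
      apply Tb_key in HY1. rewrite <- K1 in HY1. auto.
    + apply (i_syn_par SR); simpl. eapply IHP2; eauto. intro E; subst.
      apply Tb_key in HX1. rewrite K1 in HX1. auto.
    + assert (Kd : pkey tL <> pkey tL').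
      { intro E. simpl in HX1, HX2, HY1, HY2.
        destruct (uniq_back _ _ _ _ _ HX1 HX2 E); subst.
        destruct (uniq_back _ _ _ _ _ HY1 HY2 ltac:(congruence)); subst. auto. }
      constructor; [eapply IHP1; eauto | eapply IHP2; eauto]; intro E; subst; auto.
      apply Kd; congruence.
  - destruct (T_kpre_inv _ _ _ _ _ _ H1) as [[X1 [-> [HX1 N1]]]|[_ [-> [S1 ->]]]];
    destruct (T_kpre_inv _ _ _ _ _ _ H2) as [[X2 [-> [HX2 N2]]]|[_ [-> [S2 ->]]]].
    + eauto.
    + exfalso; eapply std_nb; [exact S2|exact HX1].
    + exfalso; eapply std_nb; [exact S1|exact HX2].
    + congruence.
Qed.

Lemma p2c : forall P t Q, ptrans P t Q -> ctrans P (erase t) Q.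
Proof.
  induction 1; unfold erase in *; simpl in *; try (constructor; auto).
  rewrite H1 in IHptrans1. rewrite H2, <- H3 in IHptrans2. econstructor; eauto.
Qed.

Lemma c2p : forall P l Q, ctrans P l Q -> exists t, ptrans P t Q /\ erase t = l.
Proof.
  induction 1; unfold erase in *.
  - exists (PA a k); split; [constructor; auto | reflexivity].
  - destruct IHctrans as [t [Ht E]]; injection E; intros; subst.
    exists t; split; [constructor; auto | reflexivity].
  - destruct IHctrans as [t [Ht E]]; injection E; intros; subst.
    exists t; split; [constructor; auto | reflexivity].
  - destruct IHctrans as [t [Ht E]]; injection E; intros; subst.
    exists (PPar SL t); split; [constructor; auto | reflexivity].
  - destruct IHctrans as [t [Ht E]]; injection E; intros; subst.
    exists (PPar SR t); split; [constructor; auto | reflexivity].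
  - destruct IHctrans1 as [t [Ht E]]; injection E; intros; subst.
    destruct IHctrans2 as [t' [Ht' E']]; injection E'; intros; subst.
    exists (PSyn t t'); split; [econstructor; eauto | reflexivity].
  - destruct IHctrans as [t [Ht E]]; injection E; intros; subst.
    exists (PSum SL t); split; [constructor; auto | reflexivity].
  - destruct IHctrans as [t [Ht E]]; injection E; intros; subst.
    exists (PSum SR t); split; [constructor; auto | reflexivity].
Qed.

Lemma csq P Q R S th th' th2 th3 b b' :
  T P th Q b -> T P th' R b' -> T Q th2 S b' -> T R th3 S b ->
  erase th2 = erase th' -> erase th3 = erase th -> pind th th' -> th2 = th'.
Proof.
  intros H1 H2 H3 H4 E2 E3 Hp.
  assert (K2 : pkey th2 = pkey th') by (unfold erase in E2; congruence).
  assert (K3 : pkey th3 = pkey th) by (unfold erase in E3; congruence).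
  destruct (square_p _ _ _ _ _ _ _ H1 H2 Hp) as [S1 [U1 U2]].
  assert (Kd : pkey th <> pkey th') by exact (key_neq _ _ _ _ _ _ _ _ H1 H2 U1).
  destruct b'.
  - destruct b.
    + simpl in *.
      assert (Hp2 : pind th2 th3).
      { apply (bti_p S th2 th3 Q R); simpl; auto. intro E; subst. congruence. }
      destruct (square_p S th2 th3 false false Q R ltac:(exact H3) ltac:(exact H4) Hp2) as [S0 [V1 V2]].
      simpl in V1, V2.
      destruct (uniq_back _ _ _ _ _ H1 V1 ltac:(congruence)); subst.
      eapply det; eauto.
    + simpl in *.
      destruct (uniq_back _ _ _ _ _ H4 U2 K3); subst.
      eapply det; eauto.
  - simpl in *. destruct (uniq_back _ _ _ _ _ H3 U1 K2); auto.
Qed.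

Section Gen.
Variables (St L : Type) (F : St -> L -> St -> Prop) (st : St -> Prop).
Lemma reach_sym : forall P Q, reach F P Q -> reach F Q P.
Proof.
  induction 1.
  - apply rt_step. destruct H as [l [H|H]]; exists l; auto.
  - apply rt_refl.
  - eapply rt_trans; eauto.
Qed.
Lemma valid_step t : valid F t -> step F (src t) (tgt t).
Proof. unfold valid; destruct (fwd t); intro; exists (lab t); auto. Qed.
Lemma in_lts_tgt t : in_lts F st t -> reachable F st (tgt t).
Proof.
  intros [[P0 [H0 H1]] H2]. exists P0; split; auto.
  eapply rt_trans; [exact H1| apply rt_step; apply valid_step; auto].
Qed.
Lemma back_reach t : valid F t -> reach F (tgt t) (src t).
Proof. intro H; apply reach_sym, rt_step, valid_step; auto. Qed.
End Gen.

Lemma validP t : valid ptrans t <-> T (src t) (lab t) (tgt t) (fwd t).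
Proof. unfold valid, T; tauto. Qed.

Lemma corr_T t th : corr t th <-> T (src t) th (tgt t) (fwd t) /\ erase th = lab t.
Proof. unfold corr, valid, T; simpl; tauto. Qed.

Lemma T2C P th Q b : T P th Q b -> valid ctrans (Tr P (erase th) Q b).
Proof. destruct b; simpl; apply p2c. Qed.

Lemma corr_exists t : valid ctrans t -> exists th, corr t th.
Proof.
  destruct t as [P l Q b]; unfold valid; simpl; destruct b; intro H;
  destruct (c2p _ _ _ H) as [th [H1 H2]]; exists th; apply corr_T; simpl; auto.
Qed.

Lemma corr_fun t th1 th2 : corr t th1 -> corr t th2 -> th1 = th2.
Proof.
  intros H1 H2; apply corr_T in H1; apply corr_T in H2.
  destruct H1 as [H1 _], H2 as [H2 _]. destruct (fwd t); simpl in *; exact (det _ _ _ H1 _ H2).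
Qed.

Lemma corr_inv t th : corr (inv t) th <-> corr t th.
Proof. rewrite !corr_T; destruct t as [P l Q b]; destruct b; simpl; tauto. Qed.

Lemma ev_inv_p : forall t t', ev_eq ptrans std pI t t' ->
  lab t = lab t' /\ reach ptrans (src t) (src t').
Proof.
  induction 1.
  - destruct H as [u [u' [Hsq _]]].
    destruct Hsq as [Ht [Hu [Hu' [Ht' [E1 [E2 [E3 [E4 [E5 [E6 [E7 E8]]]]]]]]]]].
    split; [auto|]. rewrite E1, E3. apply rt_step, valid_step, Hu.
  - split; [auto|apply rt_refl].
  - destruct IHclos_refl_sym_trans; split; auto. apply reach_sym; auto.
  - destruct IHclos_refl_sym_trans1, IHclos_refl_sym_trans2; split; [congruence|eapply rt_trans; eauto].
Qed.

Lemma part_p : SP ptrans std pI /\ BTI ptrans std pI /\ WF ptrans std /\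
   PCI ptrans std pI /\ IRE ptrans std pI /\ RPI ptrans std pI.
Proof.
  split; [|split; [|split; [|split; [|split]]]].
  - intros [P th Q b] [P' th' R b'] Ht Hu Hs [Hc Hp]; simpl in *; subst P'.
    destruct (square_p _ _ _ _ _ _ _ (proj2 Ht) (proj2 Hu) Hp) as [S [U1 U2]].
    exists (Tr Q th' S b'), (Tr R th S b).
    unfold square, in_lts; simpl; repeat split; auto; simpl in *.
    all: first [exact (in_lts_tgt _ _ _ _ _ Ht) | exact (in_lts_tgt _ _ _ _ _ Hu) | exact (proj1 Ht) | exact (proj1 Hu) | exact (proj2 Ht) | exact (proj2 Hu) | idtac].
  - intros [P th Q b] [P' th' R b'] Ht Hu Hft Hfu Hs Hne; simpl in *; subst P' b b'.
    split.
    + unfold connected; simpl. apply rt_step. exists th'. right. exact (proj2 Hu).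
    + simpl. apply (bti_p P th th' Q R); [exact (proj2 Ht)|exact (proj2 Hu)|].
      intro E; subst. apply Hne.
      destruct (uniq_back _ _ _ _ _ (proj2 Ht) (proj2 Hu) eq_refl) as [_ E2]; simpl in E2; subst; auto.
  - intros [f [_ Hf]].
    assert (A : forall n, length (keys (f n)) + n <= length (keys (f 0))).
    { induction n; [lia|]. destruct (Hf n) as [l Hl]. apply len in Hl. lia. }
    specialize (A (S (length (keys (f 0))))). lia.
  - intros t u u' t' Hsq [Hc Hp].
    destruct Hsq as [Ht [Hu [Hu' [Ht' [E1 [E2 [E3 [E4 [E5 [E6 [E7 E8]]]]]]]]]]].
    split.
    + unfold connected; simpl. rewrite E2. apply back_reach, Ht.
    + simpl. rewrite E5. apply pind_sym; auto.
  - intros t t' u _ _ _ Hev [Hc Hp].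
    destruct (ev_inv_p _ _ Hev) as [El Er]. split.
    + unfold connected in *. eapply rt_trans; eauto.
    + rewrite El; auto.
  - intros t t' Ht _ [Hc Hp]. split.
    + unfold connected in *; simpl. eapply rt_trans; [apply back_reach, Ht|exact Hc].
    + exact Hp.
Qed.

Lemma ev_inv_c : forall t t', ev_eq ctrans std cI t t' ->
  reach ctrans (src t) (src t') /\ forall th, corr t th <-> corr t' th.
Proof.
  induction 1.
  - destruct H as [u [u' [Hsq [Hc [th [th' [Ct [Cu Hp]]]]]]]].
    destruct Hsq as [Ht [Hu [Hu' [Ht' [E1 [E2 [E3 [E4 [E5 [E6 [E7 E8]]]]]]]]]]].
    split. { rewrite E1, E3. apply rt_step, valid_step, Hu. }
    destruct (corr_exists _ (proj2 Hu')) as [th2 C2].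
    destruct (corr_exists _ (proj2 Ht')) as [th3 C3].
    assert (Eq : th3 = th).
    { apply corr_T in Ct; apply corr_T in Cu; apply corr_T in C2; apply corr_T in C3.
      destruct Ct as [Ct Lt], Cu as [Cu Lu], C2 as [C2 L2], C3 as [C3 L3].
      rewrite E1 in Ct. rewrite E3, E8 in C3. rewrite E2, E4, E6 in C2.
      eapply (csq _ _ _ _ th' th th3 th2 _ _ Cu Ct C3 C2); try congruence.
      apply pind_sym; auto. }
    subst th3. intro xx; split; intro Cx.
    + rewrite (corr_fun _ _ _ Cx Ct). auto.
    + rewrite (corr_fun _ _ _ Cx C3). auto.
  - split; [apply rt_refl| tauto].
  - destruct IHclos_refl_sym_trans as [A B]; split; [apply reach_sym; auto|].
    intro th; rewrite B; tauto.
  - destruct IHclos_refl_sym_trans1 as [A B], IHclos_refl_sym_trans2 as [C D].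
    split; [eapply rt_trans; eauto|]. intro th; rewrite B, D; tauto.
Qed.

Lemma part_c : SP ctrans std cI /\ BTI ctrans std cI /\ WF ctrans std /\
   PCI ctrans std cI /\ IRE ctrans std cI /\ RPI ctrans std cI.
Proof.
  split; [|split; [|split; [|split; [|split]]]].
  - intros [P l Q b] [P' l' R b'] Ht Hu Hs [Hc [th [th' [Ct [Cu Hp]]]]]; simpl in *; subst P'.
    apply corr_T in Ct; apply corr_T in Cu; simpl in *.
    destruct Ct as [Ct Lt], Cu as [Cu Lu].
    destruct (square_p _ _ _ _ _ _ _ Ct Cu Hp) as [S [U1 U2]].
    exists (Tr Q l' S b'), (Tr R l S b).
    subst l l'.
    unfold square, in_lts; simpl; repeat split; auto.
    all: first [exact (in_lts_tgt _ _ _ _ _ Ht) | exact (in_lts_tgt _ _ _ _ _ Hu) | exact (proj1 Ht) | exact (proj1 Hu) | exact (proj2 Ht) | exact (proj2 Hu) | exact (T2C _ _ _ _ U1) | exact (T2C _ _ _ _ U2)].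
  - intros [P l Q b] [P' l' R b'] Ht Hu Hft Hfu Hs Hne; simpl in *; subst P' b b'.
    split.
    + unfold connected; simpl. apply rt_step. exists l'. right. exact (proj2 Hu).
    + destruct (corr_exists _ (proj2 Ht)) as [th Ct].
      destruct (corr_exists _ (proj2 Hu)) as [th' Cu].
      exists th, th'; split; [auto|split; [auto|]].
      apply corr_T in Ct; apply corr_T in Cu; simpl in *.
      destruct Ct as [Ct Lt], Cu as [Cu Lu].
      apply (bti_p P th th' Q R); auto.
      intro E; subst. apply Hne.
      destruct (uniq_back _ _ _ _ _ Ct Cu eq_refl); subst; congruence.
  - intros [f [_ Hf]].
    assert (A : forall n, length (keys (f n)) + n <= length (keys (f 0))).
    { induction n; [lia|]. destruct (Hf n) as [l Hl].
      destruct (c2p _ _ _ Hl) as [th [Hl' _]]. apply len in Hl'. lia. }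
    specialize (A (S (length (keys (f 0))))). lia.
  - intros t u u' t' Hsq [Hc [th [th' [Ct [Cu Hp]]]]].
    destruct Hsq as [Ht [Hu [Hu' [Ht' [E1 [E2 [E3 [E4 [E5 [E6 [E7 E8]]]]]]]]]]].
    destruct (corr_exists _ (proj2 Hu')) as [th2 C2].
    destruct (corr_exists _ (proj2 Ht')) as [th3 C3].
    assert (Eq : th2 = th').
    { apply corr_T in Ct; apply corr_T in Cu; apply corr_T in C2; apply corr_T in C3.
      destruct Ct as [Ct Lt], Cu as [Cu Lu], C2 as [C2 L2], C3 as [C3 L3].
      rewrite E1 in Ct. rewrite E3, E8 in C3. rewrite E2, E4, E6 in C2.
      eapply (csq _ _ _ _ th th' th2 th3 _ _ Ct Cu C2 C3); try congruence. }
    subst th2. split.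
    + unfold connected; simpl. rewrite E2. apply back_reach, Ht.
    + exists th', th; split; [auto|split; [apply corr_inv; auto|apply pind_sym; auto]].
  - intros t t' u _ _ _ Hev [Hc [th [th' [Ct [Cu Hp]]]]].
    destruct (ev_inv_c _ _ Hev) as [Er Ec]. split.
    + unfold connected in *. eapply rt_trans; eauto.
    + exists th, th'; split; [apply Ec; auto|auto].
  - intros t t' Ht _ [Hc [th [th' [Ct [Cu Hp]]]]]. split.
    + unfold connected in *; simpl. eapply rt_trans; [apply back_reach, Ht|exact Hc].
    + exists th, th'; split; [apply corr_inv; auto|auto].
Qed.

Theorem theorem6p1 :
  (SP ptrans std pI /\ BTI ptrans std pI /\ WF ptrans std /\
   PCI ptrans std pI /\ IRE ptrans std pI /\ RPI ptrans std pI) /\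
  (SP ctrans std cI /\ BTI ctrans std cI /\ WF ctrans std /\
   PCI ctrans std cI /\ IRE ctrans std cI /\ RPI ctrans std cI).
Proof. exact (conj part_p part_c). Qed.
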